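(* Let $\phi_1,\phi_2\in D=\{z\in\mathbb{C};|z|<1\}$ and let $Z$ be a random variable on the unit circle $\partial D$ with density, with respect to arc length, $$f(z)=\frac{1}{2\pi}\frac{|1-\phi_1\overline{\phi_2}|^2}{1-|\phi_1\overline{\phi_2}|^2}\frac{1-|\phi_1|^2}{|z-\phi_1|^2}\frac{1-|\phi_2|^2}{|z-\phi_2|^2}.$$ Then the skewness $s$ of $Z$ is $$s=\frac{|1-\phi_1\overline{\phi_2}|^2}{(1-|\phi_1\overline{\phi_2}|^2)^3}\rho^{-2}(1-\rho)^{-3/2}\operatorname{Im}(\phi_1\overline{\phi_2})(|\phi_1|^2-|\phi_2|^2)(1-|\phi_1|^2)(1-|\phi_2|^2),$$ where $\rho=|(1-|\phi_2|^2)\phi_1+(1-|\phi_1|^2)\phi_2|/(1-|\phi_1\overline{\phi_2}|^2)$.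
   Context: For a random variable $Z$ on the unit circle with $E(Z)\neq 0$, the mean direction is $\zeta=\arg\{E(Z)\}$, the mean resultant length is $\delta=|E(Z)|$, and the (Mardia) skewness is $s=E[\operatorname{Im}\{(Z\mathrm{e}^{-\mathrm{i}\zeta})^2\}]/(1-\delta)^{3/2}$. *)

(* Defs.v *)
From Stdlib Require Import Reals.
From Coquelicot Require Import Coquelicot.
Open Scope R_scope.

Definition circ (t : R) : C := (cos t, sin t).

(* Expectation of a real function h(Z) when Z has density g w.r.t. arc length
   on the unit circle (arc length parametrised by theta in [0, 2 pi]). *)
Definition Ecirc (g : C -> R) (h : C -> R) : R :=
  RInt (fun t => h (circ t) * g (circ t)) 0 (2 * PI).

Definition cmean (g : C -> R) : C := (Ecirc g Re, Ecirc g Im).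

Definition mrl (g : C -> R) : R := Cmod (cmean g).

Definition is_mean_direction (g : C -> R) (zeta : R) : Prop :=
  cmean g = Cmult (RtoC (mrl g)) (circ zeta).

Definition skewness (g : C -> R) (zeta : R) : R :=
  Ecirc g (fun z => Im (Cmult (Cmult z (circ (- zeta))) (Cmult z (circ (- zeta)))))
  / Rpower (1 - mrl g) (3 / 2).

Definition dens (p1 p2 : C) (z : C) : R :=
  / (2 * PI)
  * ((Cmod (Cminus 1 (Cmult p1 (Cconj p2)))) ^ 2
     / (1 - (Cmod (Cmult p1 (Cconj p2))) ^ 2))
  * ((1 - Cmod p1 ^ 2) / (Cmod (Cminus z p1)) ^ 2)
  * ((1 - Cmod p2 ^ 2) / (Cmod (Cminus z p2)) ^ 2).

Definition rho (p1 p2 : C) : R :=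
  Cmod (Cplus (Cmult (RtoC (1 - Cmod p2 ^ 2)) p1) (Cmult (RtoC (1 - Cmod p1 ^ 2)) p2))
  / (1 - (Cmod (Cmult p1 (Cconj p2))) ^ 2).

(* Main.v *)
Require Import Defs.
From Stdlib Require Import Reals Lra Psatz Classical.
From Coquelicot Require Import Coquelicot.
Open Scope R_scope.

Lemma isd_pair (f : R -> C) x (d : C) :
  is_derive (fun t => fst (f t)) x (fst d) ->
  is_derive (fun t => snd (f t)) x (snd d) ->
  is_derive f x d.
Proof.
  intros H1 H2.
  destruct d as [d1 d2].
  assert (Hid : filterdiff (K := R_AbsRing) (U := prod_NormedModule R_AbsRing R_NormedModule R_NormedModule)
      (V := prod_NormedModule R_AbsRing R_NormedModule R_NormedModule) 
    (fun t => (fst t, snd t)) (locally (fst (f x), snd (f x))) (fun t => (fst t, snd t))).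
  { apply filterdiff_ext_lin with (fun t => t).
    eapply filterdiff_ext. 2: apply filterdiff_id. intros [u v]; reflexivity.
    intros [u v]; reflexivity. }
  assert (H := filterdiff_comp'_2 (fun t => fst (f t)) (fun t => snd (f t))
     (fun u v => (u, v)) x _ _ (fun u v => (u, v)) H1 H2 Hid).
  unfold is_derive.
  eapply filterdiff_ext. 2: exact H.
  intros t. simpl. destruct (f t); reflexivity.
Qed.

Lemma isd_fst (f : R -> C) x (d : C) :
  is_derive f x d -> is_derive (fun t => fst (f t)) x (fst d).
Proof.
  intros H. unfold is_derive in *.
  pose proof (filterdiff_comp f fst (fun y => scal y d) fst H (filterdiff_linear _ (is_linear_fst (U:=R_NormedModule) (V:=R_NormedModule)))) as H'.
  exact H'.
Qed.
Lemma isd_snd (f : R -> C) x (d : C) :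
  is_derive f x d -> is_derive (fun t => snd (f t)) x (snd d).
Proof.
  intros H. unfold is_derive in *.
  pose proof (filterdiff_comp f snd (fun y => scal y d) snd H (filterdiff_linear _ (is_linear_snd (U:=R_NormedModule) (V:=R_NormedModule)))) as H'.
  exact H'.
Qed.

Lemma isd_eq {V : NormedModule R_AbsRing} (f : R -> V) x l l' : is_derive f x l -> l = l' -> is_derive f x l'.
Proof. intros H <-; exact H. Qed.

Lemma isd_ext {V : NormedModule R_AbsRing} (f g : R -> V) x l : (forall t, f t = g t) -> is_derive f x l -> is_derive g x l.
Proof. intros H1 H2. eapply is_derive_ext. exact H1. exact H2. Qed.

Open Scope C_scope.

Lemma isd_Cmult (f g : R -> C) x df dg :
  is_derive f x df -> is_derive g x dg ->
  is_derive (fun t => f t * g t) x (df * g x + f x * dg).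
Proof.
  intros Hf Hg.
  pose proof (isd_fst _ _ _ Hf) as Hf1. pose proof (isd_snd _ _ _ Hf) as Hf2.
  pose proof (isd_fst _ _ _ Hg) as Hg1. pose proof (isd_snd _ _ _ Hg) as Hg2.
  apply isd_pair.
  - eapply isd_eq. eapply isd_ext. 2: apply (is_derive_minus _ _ _ _ _ (is_derive_mult _ _ _ _ _ Hf1 Hg1 Rmult_comm) (is_derive_mult _ _ _ _ _ Hf2 Hg2 Rmult_comm)).
    intros t. simpl. reflexivity.
    simpl. unfold minus, plus, opp, mult; simpl. ring.
  - eapply isd_eq. eapply isd_ext. 2: apply (is_derive_plus _ _ _ _ _ (is_derive_mult _ _ _ _ _ Hf1 Hg2 Rmult_comm) (is_derive_mult _ _ _ _ _ Hf2 Hg1 Rmult_comm)).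
    intros t. simpl. reflexivity.
    simpl. unfold minus, plus, opp, mult; simpl. ring.
Qed.

Lemma C_nz_norm (z : C) : z <> 0 -> (fst z * fst z + snd z * snd z)%R <> 0%R.
Proof.
  intros H Hn. apply H. destruct z as [a b]. simpl in Hn.
  assert (a = 0%R) by nra. assert (b = 0%R) by nra. subst. reflexivity.
Qed.

Lemma isd_Cinv (f : R -> C) x df :
  is_derive f x df -> f x <> 0 ->
  is_derive (fun t => / f t) x (- df * / f x * / f x).
Proof.
  intros Hf Hnz.
  pose proof (isd_fst _ _ _ Hf) as Hf1. pose proof (isd_snd _ _ _ Hf) as Hf2.
  pose proof (C_nz_norm _ Hnz) as Hn.
  assert (Hn' : (fst (f x) ^ 2 + snd (f x) ^ 2)%R <> 0%R) by (simpl; rewrite !Rmult_1_r; exact Hn).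
  assert (HN : is_derive (fun t => (fst (f t) ^ 2 + snd (f t) ^ 2)%R) x
        (2 * fst (f x) * fst df + 2 * snd (f x) * snd df)%R).
  { eapply isd_eq. eapply isd_ext. 2: apply (is_derive_plus _ _ _ _ _ (is_derive_mult _ _ _ _ _ Hf1 Hf1 Rmult_comm) (is_derive_mult _ _ _ _ _ Hf2 Hf2 Rmult_comm)).
    intros t. simpl. unfold plus, mult; simpl. ring.
    unfold plus, mult; simpl. ring. }
  pose proof (is_derive_inv _ _ _ HN Hn') as HI.
  apply isd_pair.
  - eapply isd_eq. eapply isd_ext. 2: apply (is_derive_mult _ _ _ _ _ Hf1 HI Rmult_comm).
    intros t. simpl. unfold mult; simpl. unfold Rdiv. ring.
    clear -Hn. revert Hn. destruct (f x) as [a b]. destruct df as [c d]. simpl. unfold plus, mult; simpl. intro Hn0. field. exact Hn0.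
  - eapply isd_eq. eapply isd_ext. 2: apply (is_derive_scal _ _ (-1) _ (is_derive_mult _ _ _ _ _ Hf2 HI Rmult_comm)).
    intros t. simpl. unfold mult; simpl. unfold Rdiv. ring.
    clear -Hn. revert Hn. destruct (f x) as [a b]. destruct df as [c d]. simpl. unfold plus, mult; simpl. intro Hn0. field. exact Hn0.
Qed.

Lemma isd_Cconst (c : C) (x : R) : is_derive (K := R_AbsRing) (V := C_R_NormedModule) (fun _ => c) x (RtoC 0).
Proof. apply isd_pair; simpl; apply (is_derive_const (K:=R_AbsRing) (V:=R_NormedModule)). Qed.

Lemma isd_Cplus (f g : R -> C) x df dg :
  is_derive f x df -> is_derive g x dg -> is_derive (fun t => f t + g t) x (df + dg).
Proof.
  intros Hf Hg. apply isd_pair.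
  - simpl. apply (is_derive_plus _ _ _ _ _ (isd_fst _ _ _ Hf) (isd_fst _ _ _ Hg)).
  - simpl. apply (is_derive_plus _ _ _ _ _ (isd_snd _ _ _ Hf) (isd_snd _ _ _ Hg)).
Qed.

Lemma isd_Cminus (f g : R -> C) x df dg :
  is_derive f x df -> is_derive g x dg -> is_derive (fun t => f t - g t) x (df - dg).
Proof.
  intros Hf Hg. apply isd_pair.
  - simpl. apply (is_derive_minus _ _ _ _ _ (isd_fst _ _ _ Hf) (isd_fst _ _ _ Hg)).
  - simpl. apply (is_derive_minus _ _ _ _ _ (isd_snd _ _ _ Hf) (isd_snd _ _ _ Hg)).
Qed.

Lemma isd_circ x : is_derive circ x (Ci * circ x).
Proof.
  apply isd_pair; unfold circ; simpl.
  - eapply isd_eq. apply is_derive_cos. unfold Ci; simpl; ring.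
  - eapply isd_eq. apply is_derive_sin. unfold Ci; simpl; ring.
Qed.

Definition CLog (u : C) : C := ((ln (fst u ^ 2 + snd u ^ 2) / 2)%R, atan (snd u / fst u)).

Lemma isd_CLog (u : R -> C) x du :
  is_derive u x du -> (0 < fst (u x))%R ->
  is_derive (fun t => CLog (u t)) x (du * / u x).
Proof.
  intros Hu Hpos.
  pose proof (isd_fst _ _ _ Hu) as H1. pose proof (isd_snd _ _ _ Hu) as H2.
  assert (Hn : (0 < fst (u x) ^ 2 + snd (u x) ^ 2)%R) by nra.
  assert (HN : is_derive (fun t => (fst (u t) ^ 2 + snd (u t) ^ 2)%R) x
        (2 * fst (u x) * fst du + 2 * snd (u x) * snd du)%R).
  { eapply isd_eq. eapply isd_ext. 2: apply (is_derive_plus _ _ _ _ _ (is_derive_mult _ _ _ _ _ H1 H1 Rmult_comm) (is_derive_mult _ _ _ _ _ H2 H2 Rmult_comm)).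
    intros t. simpl. unfold plus, mult; simpl. ring.
    unfold plus, mult; simpl. ring. }
  assert (Hq : is_derive (fun t => (snd (u t) / fst (u t))%R) x
     ((snd du * fst (u x) - snd (u x) * fst du) / (fst (u x))^2)%R).
  { eapply isd_eq. eapply isd_ext. 2: apply (is_derive_mult _ _ _ _ _ H2 (is_derive_inv _ _ _ H1 (Rgt_not_eq _ _ Hpos)) Rmult_comm).
    intros t. simpl. reflexivity.
    unfold plus, mult; simpl. field. lra. }
  apply isd_pair.
  - eapply isd_eq. eapply isd_ext. 2: apply is_derive_scal with (k := (/2)%R).
    2: apply (is_derive_comp ln _ x _ _ (proj2 (is_derive_Reals _ _ _) (derivable_pt_lim_ln _ Hn)) HN).
    intros t. simpl. unfold Rdiv. ring.
    revert Hpos Hn. destruct (u x) as [a b]. destruct du as [c d]. simpl. unfold scal; simpl. unfold mult; simpl.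
    intros. field. nra.
  - eapply isd_eq.
    apply (is_derive_comp atan _ x _ _ (proj2 (is_derive_Reals _ _ _) (derivable_pt_lim_atan _)) Hq).
    revert Hpos Hn. destruct (u x) as [a b]. destruct du as [c d]. simpl. unfold scal; simpl. unfold mult; simpl.
    intros. field. split; nra.
Qed.

Definition II (f : R -> C) (l : C) := is_RInt (V := C_R_NormedModule) f 0 (2 * PI) l.

Lemma II_fst f l : II f l -> is_RInt (fun t => fst (f t)) 0 (2*PI) (fst l).
Proof. intros H. apply (is_RInt_fct_extend_fst f). exact H. Qed.
Lemma II_snd f l : II f l -> is_RInt (fun t => snd (f t)) 0 (2*PI) (snd l).
Proof. intros H. apply (is_RInt_fct_extend_snd f). exact H. Qed.
Lemma II_pair f l : is_RInt (fun t => fst (f t)) 0 (2*PI) (fst l) -> is_RInt (fun t => snd (f t)) 0 (2*PI) (snd l) -> II f l.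
Proof. intros H1 H2. destruct l. apply (is_RInt_fct_extend_pair f); assumption. Qed.

Lemma rint_eq (f : R -> R) a b l l' : is_RInt f a b l -> l = l' -> is_RInt f a b l'.
Proof. intros H <-; exact H. Qed.
Lemma rint_ext (f g : R -> R) a b l : (forall t, f t = g t) -> is_RInt f a b l -> is_RInt g a b l.
Proof. intros H1 H2. eapply is_RInt_ext. 2: exact H2. intros; apply H1. Qed.

Lemma II_ext f g l : (forall t, f t = g t) -> II f l -> II g l.
Proof. intros H1 H2. eapply is_RInt_ext. 2: exact H2. intros; apply H1. Qed.
Lemma II_eq f l l' : II f l -> l = l' -> II f l'.
Proof. intros H <-; exact H. Qed.

Lemma II_plus f g lf lg : II f lf -> II g lg -> II (fun t => f t + g t) (lf + lg).
Proof.
  intros Hf Hg. apply II_pair; simpl.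
  - apply (is_RInt_plus _ _ _ _ _ _ (II_fst _ _ Hf) (II_fst _ _ Hg)).
  - apply (is_RInt_plus _ _ _ _ _ _ (II_snd _ _ Hf) (II_snd _ _ Hg)).
Qed.
Lemma II_minus f g lf lg : II f lf -> II g lg -> II (fun t => f t - g t) (lf - lg).
Proof.
  intros Hf Hg. apply II_pair; simpl.
  - apply (is_RInt_minus _ _ _ _ _ _ (II_fst _ _ Hf) (II_fst _ _ Hg)).
  - apply (is_RInt_minus _ _ _ _ _ _ (II_snd _ _ Hf) (II_snd _ _ Hg)).
Qed.
Lemma II_cmul (c : C) f l : II f l -> II (fun t => c * f t) (c * l).
Proof.
  intros Hf. destruct c as [c1 c2]. apply II_pair; simpl.
  - eapply rint_ext. 2: apply (is_RInt_minus _ _ _ _ _ _ (is_RInt_scal _ _ _ c1 _ (II_fst _ _ Hf)) (is_RInt_scal _ _ _ c2 _ (II_snd _ _ Hf))).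
    intros t. reflexivity.
  - eapply rint_ext. 2: apply (is_RInt_plus _ _ _ _ _ _ (is_RInt_scal _ _ _ c1 _ (II_snd _ _ Hf)) (is_RInt_scal _ _ _ c2 _ (II_fst _ _ Hf))).
    intros t. reflexivity.
Qed.
Lemma II_conj f l : II f l -> II (fun t => Cconj (f t)) (Cconj l).
Proof.
  intros Hf. apply II_pair; simpl.
  - apply (II_fst _ _ Hf).
  - apply (is_RInt_opp _ _ _ _ (II_snd _ _ Hf)).
Qed.
Lemma II_const (c : C) : II (fun _ => c) (2 * PI * c).
Proof.
  eapply II_eq. apply is_RInt_const.
  destruct c as [c1 c2]. apply injective_projections; simpl; unfold scal; simpl; unfold mult; simpl; ring.
Qed.

Lemma II_deriv (F dF : R -> C) :
  (forall t, is_derive F t (dF t)) ->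
  (forall t, ex_derive (K := R_AbsRing) (V := C_R_NormedModule) dF t) ->
  F (2 * PI)%R = F 0%R -> II dF 0.
Proof.
  intros HD HC HP. eapply II_eq. apply (is_RInt_derive (V:=C_R_CompleteNormedModule)).
  intros; apply HD.
  intros; apply (ex_derive_continuous (K:=R_AbsRing) (V:=C_R_NormedModule)). apply HC.
  rewrite HP. destruct (F 0%R) as [r r0]. apply injective_projections; simpl; unfold minus, plus, opp; simpl; unfold plus, opp; simpl; apply Rplus_opp_r.
Qed.

Lemma circ_2PI : circ (2 * PI)%R = circ 0%R.
Proof. unfold circ. rewrite cos_2PI, sin_2PI, cos_0, sin_0. reflexivity. Qed.

Lemma Cmod_circ t : Cmod (circ t) = 1%R.
Proof. unfold Cmod, circ; simpl. replace (cos t * (cos t * 1) + sin t * (sin t * 1))%R with 1%R. apply sqrt_1. pose proof (sin2_cos2 t). unfold Rsqr in H. lra. Qed.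

Lemma circ_nz t : circ t <> 0.
Proof. intros H. pose proof (Cmod_circ t). rewrite H, Cmod_0 in H0. lra. Qed.

Lemma conj_circ t : Cconj (circ t) = / circ t.
Proof.
  unfold circ, Cconj, Cinv; simpl. pose proof (sin2_cos2 t). unfold Rsqr in H.
  replace (cos t * (cos t * 1) + sin t * (sin t * 1))%R with 1%R by nra.
  apply injective_projections; simpl; field.
Qed.

Lemma circ_minus_nz p t : (Cmod p < 1)%R -> circ t - p <> 0.
Proof.
  intros Hp H. assert (circ t = p) by (apply Ceq_minus; exact H).
  rewrite <- H0, Cmod_circ in Hp. lra.
Qed.

Lemma one_minus_nz (q : C) : (Cmod q < 1)%R -> 1 - q <> 0.
Proof.
  intros Hq H. assert (H0 : RtoC 1 = q) by (apply Ceq_minus; exact H).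
  rewrite <- H0, Cmod_1 in Hq. lra.
Qed.

Lemma Cmod_conj_circ_lt p t : (Cmod p < 1)%R -> (Cmod (Cconj p * circ t)%C < 1)%R.
Proof. intros H. rewrite Cmod_mult, Cmod_conj, Cmod_circ. lra. Qed.

Lemma Cmod_div_circ_lt p t : (Cmod p < 1)%R -> (Cmod (p * / circ t)%C < 1)%R.
Proof. intros H. rewrite Cmod_mult, Cmod_inv, Cmod_circ. rewrite Rinv_1. lra. apply circ_nz. Qed.

Lemma Re_pos p t : (Cmod p < 1)%R -> (0 < fst (1 - p * / circ t)%C)%R.
Proof.
  intros H. pose proof (Cmod_div_circ_lt p t H) as H1.
  destruct (p * / circ t) as [a b]. unfold Cmod in H1; simpl in *.
  assert (a < 1)%R.
  { destruct (Rle_or_lt 1 a) as [Ha|Ha]; [exfalso | exact Ha].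
    assert (1 <= sqrt (a * (a * 1) + b * (b * 1)))%R. { apply Rle_trans with (sqrt 1); [rewrite sqrt_1; lra | apply sqrt_le_1_alt; nra]. } lra. }
  lra.
Qed.

Definition A (p : C) (t : R) : C := / (1 - p * / circ t).
Definition B (p : C) (t : R) : C := / (1 - Cconj p * circ t).
Definition Q (p : C) (t : R) : C := p * / (circ t - p).

Ltac dstep := lazymatch goal with
| |- is_derive (fun _ => ?c) _ _ => apply (isd_Cconst c)
| |- is_derive (fun t => circ t) _ _ => apply isd_circ
| |- is_derive circ _ _ => apply isd_circ
| |- is_derive (fun t => (@?f t) * (@?g t)) _ _ => apply (isd_Cmult f g)
| |- is_derive (fun t => (@?f t) + (@?g t)) _ _ => apply (isd_Cplus f g)
| |- is_derive (fun t => (@?f t) - (@?g t)) _ _ => apply (isd_Cminus f g)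
| |- is_derive (fun t => / (@?f t)) _ _ => apply (isd_Cinv f)
end.
Ltac dauto := dstep; try dauto.

Lemma test : forall t, ex_derive (K:=R_AbsRing) (V:=C_R_NormedModule) (fun t => (- Ci) * circ t) t.
Proof. intros t. eexists. dauto. Qed.

Ltac toC := match goal with |- ?a = ?b => change (@eq C a b) end.
Ltac cring := apply injective_projections; simpl; ring.

Lemma I_e1 : II (fun t => circ t) 0.
Proof.
  apply (II_deriv (fun t => (- Ci) * circ t)).
  - intros t. eapply isd_eq. dauto. unfold Ci, circ; cring.
  - intros t. eexists. dauto.
  - rewrite circ_2PI. reflexivity.
Qed.

Lemma I_e2 : II (fun t => circ t * circ t) 0.
Proof.
  apply (II_deriv (fun t => ((0%R, (-/2)%R) : C) * (circ t * circ t))).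
  - intros t. eapply isd_eq. dauto. unfold Ci, circ. apply injective_projections; simpl; field.
  - intros t. eexists. dauto.
  - rewrite circ_2PI. reflexivity.
Qed.

Lemma I_Q p : (Cmod p < 1)%R -> II (Q p) 0.
Proof.
  intros Hp.
  assert (H : II (fun t => Ci * Q p t) 0).
  { apply (II_deriv (fun t => CLog (1 - p * / circ t))).
    - intros t. eapply isd_eq. apply (isd_CLog (fun t => 1 - p * / circ t)).
      dauto. all: cbv beta.
      + apply circ_nz.
      + apply Re_pos; exact Hp.
      + pose proof (circ_nz t). pose proof (circ_minus_nz p t Hp).
        pose proof (one_minus_nz _ (Cmod_div_circ_lt p t Hp)).
        unfold Q. toC. field. repeat split; assumption.
    - intros t. eexists. unfold Q. dauto. cbv beta. apply circ_minus_nz; exact Hp.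
    - rewrite circ_2PI. reflexivity. }
  eapply II_eq. eapply II_ext. 2: apply (II_cmul (- Ci) _ _ H).
  intros t. simpl. replace (- Ci * (Ci * Q p t)) with ((- Ci * Ci) * Q p t) by ring.
  replace (- Ci * Ci) with (RtoC 1). ring. unfold Ci; cring.
  cring.
Qed.

Lemma nzs p t : (Cmod p < 1)%R ->
  circ t <> 0 /\ circ t - p <> 0 /\ 1 - p * / circ t <> 0 /\ 1 - Cconj p * circ t <> 0.
Proof.
  intros Hp. repeat split.
  apply circ_nz. apply circ_minus_nz; exact Hp.
  apply one_minus_nz, Cmod_div_circ_lt; exact Hp.
  apply one_minus_nz, Cmod_conj_circ_lt; exact Hp.
Qed.

Ltac getnz p t Hp := let H := fresh "N" in pose proof (nzs p t Hp) as H; destruct H as (? & ? & ? & ?).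
Ltac fld := toC; field; repeat split; try assumption.

Lemma conj_nz (p : C) : p <> 0 -> Cconj p <> 0.
Proof. intros H H'. apply H. destruct p as [a b]. pose proof (f_equal fst H') as H1. pose proof (f_equal snd H') as H2. simpl in H1, H2. apply injective_projections; simpl; lra. Qed.

Lemma I_A p : (Cmod p < 1)%R -> II (A p) (2 * PI).
Proof.
  intros Hp. eapply II_eq. eapply II_ext. 2: apply (II_plus _ _ _ _ (II_const 1) (I_Q p Hp)).
  intros t. getnz p t Hp. unfold A, Q. fld.
  cring.
Qed.

Lemma I_eA p : (Cmod p < 1)%R -> II (fun t => circ t * A p t) (2 * PI * p).
Proof.
  intros Hp. eapply II_eq. eapply II_ext. 2: apply (II_plus _ _ _ _ I_e1 (II_cmul p _ _ (I_A p Hp))).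
  intros t. getnz p t Hp. unfold A. fld.
  toC; ring.
Qed.

Lemma I_e2A p : (Cmod p < 1)%R -> II (fun t => circ t * circ t * A p t) (2 * PI * p * p).
Proof.
  intros Hp. eapply II_eq. eapply II_ext. 2: apply (II_plus _ _ _ _ I_e2 (II_cmul p _ _ (I_eA p Hp))).
  intros t. getnz p t Hp. unfold A. fld.
  toC; ring.
Qed.

Lemma conj_A p t : (Cmod p < 1)%R -> Cconj (A p t) = B p t.
Proof.
  intros Hp. getnz p t Hp. unfold A, B.
  rewrite Cinv_conj by assumption. rewrite Cminus_conj, Cmult_conj, Cinv_conj by assumption.
  rewrite conj_circ. replace (Cconj 1) with (RtoC 1) by cring. fld.
Qed.

Lemma Ci2 : Ci * Ci = - 1.
Proof. unfold Ci; cring. Qed.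

Lemma I_B p : (Cmod p < 1)%R -> II (B p) (2 * PI).
Proof.
  intros Hp. eapply II_eq. eapply II_ext. 2: apply (II_conj _ _ (I_A p Hp)).
  intros t. apply conj_A; exact Hp.
  cring.
Qed.

Lemma I_eB p : (Cmod p < 1)%R -> II (fun t => circ t * B p t) 0.
Proof.
  intros Hp. destruct (classic (p = 0)) as [H0|H0].
  - subst p. eapply II_ext. 2: apply I_e1. intros t. unfold B.
    replace (Cconj 0) with (RtoC 0) by cring. toC; field.
  - pose proof (conj_nz _ H0) as Hc.
    eapply II_eq. eapply II_ext. 2: apply (II_cmul (/ Cconj p) _ _ (II_minus _ _ _ _ (I_B p Hp) (II_const 1))).
    intros t. getnz p t Hp. unfold B. fld.
    toC; ring.
Qed.

Lemma I_e2B p : (Cmod p < 1)%R -> II (fun t => circ t * circ t * B p t) 0.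
Proof.
  intros Hp. destruct (classic (p = 0)) as [H0|H0].
  - subst p. eapply II_ext. 2: apply I_e2. intros t. unfold B.
    replace (Cconj 0) with (RtoC 0) by cring. toC; field.
  - pose proof (conj_nz _ H0) as Hc.
    eapply II_eq. eapply II_ext. 2: apply (II_cmul (/ Cconj p) _ _ (II_minus _ _ _ _ (I_eB p Hp) I_e1)).
    intros t. getnz p t Hp. unfold B. fld.
    toC; ring.
Qed.

Lemma I_QA p1 p2 : (Cmod p1 < 1)%R -> (Cmod p2 < 1)%R ->
  II (fun t => p1 * / circ t * A p1 t * A p2 t) 0.
Proof.
  intros H1 H2. destruct (classic (p1 = p2)) as [E|E].
  - subst p2. apply (II_deriv (fun t => Ci * A p1 t)).
    + intros t. getnz p1 t H1. eapply isd_eq. unfold A. dauto. all: cbv beta; try assumption.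
      unfold A. transitivity (- (Ci * Ci) * (p1 * / circ t * / (1 - p1 * / circ t) * / (1 - p1 * / circ t))).
      fld. rewrite Ci2. toC; ring.
    + intros t. getnz p1 t H1. eexists. unfold A. dauto. all: try (cbv beta; assumption).
    + unfold A; rewrite circ_2PI. reflexivity.
  - assert (Hd : p1 - p2 <> 0) by (intro H; apply E; apply Ceq_minus; exact H).
    eapply II_eq. eapply II_ext. 2: apply (II_cmul (p1 / (p1 - p2)) _ _ (II_minus _ _ _ _ (I_A p1 H1) (I_A p2 H2))).
    intros t. getnz p1 t H1. getnz p2 t H2. unfold A. fld.
    toC; ring.
Qed.

Lemma I_AA p1 p2 : (Cmod p1 < 1)%R -> (Cmod p2 < 1)%R ->
  II (fun t => A p1 t * A p2 t) (2 * PI).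
Proof.
  intros H1 H2. eapply II_eq. eapply II_ext. 2: apply (II_plus _ _ _ _ (I_A p2 H2) (I_QA p1 p2 H1 H2)).
  intros t. getnz p1 t H1. getnz p2 t H2. unfold A. fld.
  toC; ring.
Qed.

Lemma I_eAA p1 p2 : (Cmod p1 < 1)%R -> (Cmod p2 < 1)%R ->
  II (fun t => circ t * A p1 t * A p2 t) (2 * PI * (p1 + p2)).
Proof.
  intros H1 H2. eapply II_eq. eapply II_ext. 2: apply (II_plus _ _ _ _ (I_eA p2 H2) (II_cmul p1 _ _ (I_AA p1 p2 H1 H2))).
  intros t. getnz p1 t H1. getnz p2 t H2. unfold A. fld.
  toC; ring.
Qed.

Lemma I_e2AA p1 p2 : (Cmod p1 < 1)%R -> (Cmod p2 < 1)%R ->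
  II (fun t => circ t * circ t * A p1 t * A p2 t) (2 * PI * (p1 * p1 + p1 * p2 + p2 * p2)).
Proof.
  intros H1 H2. eapply II_eq. eapply II_ext. 2: apply (II_plus _ _ _ _ (I_e2A p2 H2) (II_cmul p1 _ _ (I_eAA p1 p2 H1 H2))).
  intros t. getnz p1 t H1. getnz p2 t H2. unfold A. fld.
  toC; ring.
Qed.

Lemma I_BB0 p1 p2 : (Cmod p1 < 1)%R -> (Cmod p2 < 1)%R ->
  II (fun t => Cconj p1 * circ t * B p1 t * B p2 t) 0.
Proof.
  intros H1 H2. eapply II_eq. eapply II_ext. 2: apply (II_conj _ _ (I_QA p1 p2 H1 H2)).
  intros t. getnz p1 t H1. rewrite !Cmult_conj, conj_A, conj_A by assumption.
  rewrite Cinv_conj by assumption. rewrite conj_circ. fld.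
  cring.
Qed.

Lemma I_eBB p1 p2 : (Cmod p1 < 1)%R -> (Cmod p2 < 1)%R ->
  II (fun t => circ t * B p1 t * B p2 t) 0.
Proof.
  intros H1 H2. destruct (classic (p1 = 0)) as [H0|H0].
  - subst p1. eapply II_ext. 2: apply (I_eB p2 H2). intros t. unfold B.
    replace (Cconj 0) with (RtoC 0) by cring. getnz p2 t H2. fld.
  - pose proof (conj_nz _ H0) as Hc.
    eapply II_eq. eapply II_ext. 2: apply (II_cmul (/ Cconj p1) _ _ (I_BB0 p1 p2 H1 H2)).
    intros t. getnz p1 t H1. getnz p2 t H2. unfold B. fld.
    toC; ring.
Qed.

Lemma I_e2BB p1 p2 : (Cmod p1 < 1)%R -> (Cmod p2 < 1)%R ->
  II (fun t => circ t * circ t * B p1 t * B p2 t) 0.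
Proof.
  intros H1 H2. destruct (classic (p1 = 0)) as [H0|H0].
  - subst p1. eapply II_ext. 2: apply (I_e2B p2 H2). intros t. unfold B.
    replace (Cconj 0) with (RtoC 0) by cring. getnz p2 t H2. fld.
  - pose proof (conj_nz _ H0) as Hc.
    eapply II_eq. eapply II_ext. 2: apply (II_cmul (/ Cconj p1) _ _ (II_minus _ _ _ _ (I_eBB p1 p2 H1 H2) (I_eB p2 H2))).
    intros t. getnz p1 t H1. getnz p2 t H2. unfold B. fld.
    toC; ring.
Qed.

Definition Pr (p z : C) : R := ((1 - Cmod p ^ 2) / (Cmod (Cminus z p)) ^ 2)%R.

Lemma invc_nz p t : (Cmod p < 1)%R -> / circ t - Cconj p <> 0.
Proof.
  intros Hp H. destruct (nzs p t Hp) as (Hc & _ & _ & H4). apply H4.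
  replace (1 - Cconj p * circ t) with (circ t * (/ circ t - Cconj p)) by fld.
  rewrite H. toC; ring.
Qed.

Lemma P_C p t : (Cmod p < 1)%R -> RtoC (Pr p (circ t)) = A p t + B p t - 1.
Proof.
  intros Hp. getnz p t Hp. pose proof (invc_nz p t Hp) as Hi.
  unfold Pr. assert (Hm : (Cmod (circ t - p) ^ 2)%R <> 0%R).
  { apply pow_nonzero. intro Hz. apply H0. apply Cmod_eq_0. exact Hz. }
  rewrite RtoC_div by exact Hm. rewrite RtoC_minus, !Cmod2_conj.
  rewrite Cminus_conj, conj_circ. unfold A, B. fld.
Qed.

Lemma Cmod_a_lt p1 p2 : (Cmod p1 < 1)%R -> (Cmod p2 < 1)%R -> (Cmod (p1 * Cconj p2) < 1)%R.
Proof.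
  intros H1 H2. rewrite Cmod_mult, Cmod_conj.
  pose proof (Cmod_ge_0 p1). pose proof (Cmod_ge_0 p2). nra.
Qed.
Lemma Cmod_ab_lt p1 p2 : (Cmod p1 < 1)%R -> (Cmod p2 < 1)%R -> (Cmod (Cconj p1 * p2) < 1)%R.
Proof.
  intros H1 H2. rewrite Cmod_mult, Cmod_conj.
  pose proof (Cmod_ge_0 p1). pose proof (Cmod_ge_0 p2). nra.
Qed.

Definition PP p1 p2 t := (A p1 t + B p1 t - 1) * (A p2 t + B p2 t - 1).

Lemma J1 p1 p2 : (Cmod p1 < 1)%R -> (Cmod p2 < 1)%R ->
  II (fun t => circ t * PP p1 p2 t)
     (2 * PI * (p1 / (1 - p1 * Cconj p2) + p2 / (1 - Cconj p1 * p2))).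
Proof.
  intros H1 H2.
  pose proof (one_minus_nz _ (Cmod_a_lt _ _ H1 H2)) as Ha.
  pose proof (one_minus_nz _ (Cmod_ab_lt _ _ H1 H2)) as Hb.
  eapply II_eq. eapply II_ext.
  2: apply (II_plus _ _ _ _
       (II_plus _ _ _ _
         (II_plus _ _ _ _ (I_eAA p1 p2 H1 H2) (I_eBB p1 p2 H1 H2))
         (II_plus _ _ _ _
            (II_cmul (/ (1 - p1 * Cconj p2)) _ _ (II_minus _ _ _ _ (II_plus _ _ _ _ (I_eA p1 H1) (I_eB p2 H2)) I_e1))
            (II_cmul (/ (1 - Cconj p1 * p2)) _ _ (II_minus _ _ _ _ (II_plus _ _ _ _ (I_eB p1 H1) (I_eA p2 H2)) I_e1))))
       (II_minus _ _ _ _ I_e1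
         (II_plus _ _ _ _ (II_plus _ _ _ _ (I_eA p1 H1) (I_eB p1 H1)) (II_plus _ _ _ _ (I_eA p2 H2) (I_eB p2 H2))))).
  intros t. getnz p1 t H1. getnz p2 t H2. unfold PP, A, B. fld.
  fld.
Qed.

Lemma J2 p1 p2 : (Cmod p1 < 1)%R -> (Cmod p2 < 1)%R ->
  II (fun t => circ t * circ t * PP p1 p2 t)
     (2 * PI * (p1 * p1 / (1 - p1 * Cconj p2) + p1 * p2 + p2 * p2 / (1 - Cconj p1 * p2))).
Proof.
  intros H1 H2.
  pose proof (one_minus_nz _ (Cmod_a_lt _ _ H1 H2)) as Ha.
  pose proof (one_minus_nz _ (Cmod_ab_lt _ _ H1 H2)) as Hb.
  eapply II_eq. eapply II_ext.
  2: apply (II_plus _ _ _ _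
       (II_plus _ _ _ _
         (II_plus _ _ _ _ (I_e2AA p1 p2 H1 H2) (I_e2BB p1 p2 H1 H2))
         (II_plus _ _ _ _
            (II_cmul (/ (1 - p1 * Cconj p2)) _ _ (II_minus _ _ _ _ (II_plus _ _ _ _ (I_e2A p1 H1) (I_e2B p2 H2)) I_e2))
            (II_cmul (/ (1 - Cconj p1 * p2)) _ _ (II_minus _ _ _ _ (II_plus _ _ _ _ (I_e2B p1 H1) (I_e2A p2 H2)) I_e2))))
       (II_minus _ _ _ _ I_e2
         (II_plus _ _ _ _ (II_plus _ _ _ _ (I_e2A p1 H1) (I_e2B p1 H1)) (II_plus _ _ _ _ (I_e2A p2 H2) (I_e2B p2 H2))))).
  intros t. getnz p1 t H1. getnz p2 t H2. unfold PP, A, B. fld.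
  fld.
Qed.

Definition Kr (p1 p2 : C) : R :=
  ((Cmod (Cminus 1 (Cmult p1 (Cconj p2)))) ^ 2 / (1 - (Cmod (Cmult p1 (Cconj p2))) ^ 2))%R.

Lemma dens_C p1 p2 t : (Cmod p1 < 1)%R -> (Cmod p2 < 1)%R ->
  RtoC (dens p1 p2 (circ t)) = RtoC (/ (2 * PI) * Kr p1 p2)%R * PP p1 p2 t.
Proof.
  intros H1 H2.
  change (RtoC (/ (2 * PI) * Kr p1 p2 * Pr p1 (circ t) * Pr p2 (circ t))%R = RtoC (/ (2 * PI) * Kr p1 p2)%R * PP p1 p2 t).
  rewrite !RtoC_mult, P_C, P_C by assumption. unfold PP. rewrite <- RtoC_mult. toC; ring.
Qed.

Lemma Ecirc_fst g h (F : R -> C) l : II F l -> (forall t, h (circ t) * g (circ t) = fst (F t))%R -> Ecirc g h = fst l.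
Proof.
  intros HF He. unfold Ecirc. apply is_RInt_unique. eapply rint_ext. 2: apply (II_fst _ _ HF).
  intros t. rewrite He. reflexivity.
Qed.
Lemma Ecirc_snd g h (F : R -> C) l : II F l -> (forall t, h (circ t) * g (circ t) = snd (F t))%R -> Ecirc g h = snd l.
Proof.
  intros HF He. unfold Ecirc. apply is_RInt_unique. eapply rint_ext. 2: apply (II_snd _ _ HF).
  intros t. rewrite He. reflexivity.
Qed.

Lemma cmean_val p1 p2 : (Cmod p1 < 1)%R -> (Cmod p2 < 1)%R ->
  cmean (dens p1 p2) = RtoC (/ (2 * PI) * Kr p1 p2)%R *
     (2 * PI * (p1 / (1 - p1 * Cconj p2) + p2 / (1 - Cconj p1 * p2))).
Proof.
  intros H1 H2.
  pose proof (II_cmul (RtoC (/ (2 * PI) * Kr p1 p2)%R) _ _ (J1 p1 p2 H1 H2)) as HJ.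
  assert (E : forall t, RtoC (/ (2 * PI) * Kr p1 p2)%R * (circ t * PP p1 p2 t) = circ t * RtoC (dens p1 p2 (circ t))).
  { intros t. rewrite dens_C by assumption. toC; ring. }
  unfold cmean. apply injective_projections; simpl.
  - apply (Ecirc_fst _ _ _ _ HJ). intros t. cbv beta. rewrite E. unfold Re. destruct (circ t) as [u v]. simpl. ring.
  - apply (Ecirc_snd _ _ _ _ HJ). intros t. cbv beta. rewrite E. unfold Im. destruct (circ t) as [u v]. simpl. ring.
Qed.

Lemma Cconj_circ_opp z : circ (- z) = Cconj (circ z).
Proof. unfold circ, Cconj. simpl. rewrite cos_neg, sin_neg. reflexivity. Qed.

Lemma skn_val p1 p2 zeta : (Cmod p1 < 1)%R -> (Cmod p2 < 1)%R ->
  Ecirc (dens p1 p2) (fun z => Im (Cmult (Cmult z (circ (- zeta))) (Cmult z (circ (- zeta))))) =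
  Im (Cconj (circ zeta) * Cconj (circ zeta) * (RtoC (/ (2 * PI) * Kr p1 p2)%R *
     (2 * PI * (p1 * p1 / (1 - p1 * Cconj p2) + p1 * p2 + p2 * p2 / (1 - Cconj p1 * p2))))).
Proof.
  intros H1 H2.
  pose proof (II_cmul (Cconj (circ zeta) * Cconj (circ zeta)) _ _ (II_cmul (RtoC (/ (2 * PI) * Kr p1 p2)%R) _ _ (J2 p1 p2 H1 H2))) as HJ.
  apply (Ecirc_snd _ _ _ _ HJ). intros t. cbv beta.
  assert (E : Cconj (circ zeta) * Cconj (circ zeta) * (RtoC (/ (2 * PI) * Kr p1 p2)%R * (circ t * circ t * PP p1 p2 t)) =
     (circ t * circ (- zeta)) * (circ t * circ (- zeta)) * RtoC (dens p1 p2 (circ t))).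
  { rewrite dens_C by assumption. rewrite Cconj_circ_opp. toC; ring. }
  rewrite E. unfold Im. destruct (circ t * circ (- zeta) * (circ t * circ (- zeta))) as [u v]. simpl. ring.
Qed.

Lemma Cmod_sq (z : C) : (Cmod z ^ 2 = fst z * fst z + snd z * snd z)%R.
Proof. unfold Cmod. rewrite pow2_sqrt. simpl; ring. nra. Qed.

Definition MM (p1 p2 : C) : C := Cplus (Cmult (RtoC (1 - Cmod p2 ^ 2)) p1) (Cmult (RtoC (1 - Cmod p1 ^ 2)) p2).
Definition MM2 (p1 p2 : C) : C :=
  p1 * p1 * (1 - Cconj p1 * p2) + p1 * p2 * ((1 - p1 * Cconj p2) * (1 - Cconj p1 * p2)) + p2 * p2 * (1 - p1 * Cconj p2).

Lemma key p1 p2 : Im (Cconj (MM p1 p2) * Cconj (MM p1 p2) * MM2 p1 p2) =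
  ((Cmod (Cminus 1 (Cmult p1 (Cconj p2)))) ^ 2 * Im (Cmult p1 (Cconj p2))
    * (Cmod p1 ^ 2 - Cmod p2 ^ 2) * (1 - Cmod p1 ^ 2) * (1 - Cmod p2 ^ 2))%R.
Proof.
  unfold MM, MM2. rewrite !Cmod_sq. destruct p1 as [x1 y1], p2 as [x2 y2]. simpl. ring.
Qed.

Lemma conj_RtoC r : Cconj (RtoC r) = RtoC r.
Proof. unfold Cconj, RtoC; simpl. apply injective_projections; simpl; ring. Qed.

Close Scope C_scope.

Theorem corollary2 (p1 p2 : C) (zeta : R) :
  Cmod p1 < 1 -> Cmod p2 < 1 ->
  cmean (dens p1 p2) <> RtoC 0 ->
  is_mean_direction (dens p1 p2) zeta ->
  skewness (dens p1 p2) zeta =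
    (Cmod (Cminus 1 (Cmult p1 (Cconj p2)))) ^ 2
      / (1 - (Cmod (Cmult p1 (Cconj p2))) ^ 2) ^ 3
    * / (rho p1 p2) ^ 2
    * / Rpower (1 - rho p1 p2) (3 / 2)
    * Im (Cmult p1 (Cconj p2))
    * (Cmod p1 ^ 2 - Cmod p2 ^ 2)
    * (1 - Cmod p1 ^ 2) * (1 - Cmod p2 ^ 2).
Proof.
  Local Open Scope C_scope.
  intros H1 H2 Hnz Hdir.
  pose proof (Cmod_a_lt _ _ H1 H2) as Ha.
  pose proof (Cmod_ge_0 (p1 * Cconj p2)) as Ha0.
  assert (HDr : (0 < 1 - Cmod (p1 * Cconj p2) ^ 2)%R) by nra.
  assert (HDc : RtoC (1 - Cmod (p1 * Cconj p2) ^ 2)%R <> 0).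
  { intro H. apply (f_equal fst) in H. simpl in H. lra. }
  assert (HD : RtoC (1 - Cmod (p1 * Cconj p2) ^ 2)%R = 1 - p1 * Cconj p2 * (Cconj p1 * p2)).
  { rewrite RtoC_minus, Cmod2_conj, Cmult_conj, Cconj_conj. toC; ring. }
  assert (HK : RtoC (Kr p1 p2) = (1 - p1 * Cconj p2) * (1 - Cconj p1 * p2) / RtoC (1 - Cmod (p1 * Cconj p2) ^ 2)%R).
  { unfold Kr. rewrite RtoC_div by lra. rewrite Cmod2_conj, Cminus_conj, Cmult_conj, Cconj_conj.
    replace (Cconj 1) with (RtoC 1) by cring. reflexivity. }
  pose proof (one_minus_nz _ (Cmod_a_lt _ _ H1 H2)) as Hna.
  pose proof (one_minus_nz _ (Cmod_ab_lt _ _ H1 H2)) as Hnb.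
  assert (HPI : RtoC (2 * PI) <> 0). { intro H. apply (f_equal fst) in H. simpl in H. pose proof PI_RGT_0. lra. }
  assert (HPI' : (2 * PI <> 0)%R). { pose proof PI_RGT_0. lra. }
  assert (Hm : cmean (dens p1 p2) = MM p1 p2 * / RtoC (1 - Cmod (p1 * Cconj p2) ^ 2)%R).
  { rewrite cmean_val by assumption. rewrite RtoC_mult, RtoC_inv by exact HPI'. rewrite HK, HD.
    unfold MM. rewrite !RtoC_minus, !Cmod2_conj. rewrite HD in HDc.
    rewrite RtoC_mult in HPI. rewrite RtoC_mult. assert (RtoC PI <> 0) by (intro HH; apply (f_equal fst) in HH; simpl in HH; pose proof PI_RGT_0; lra). fld. }
  assert (Hpi : RtoC PI <> 0) by (intro HH; apply (f_equal fst) in HH; simpl in HH; pose proof PI_RGT_0; lra).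
  assert (Hm2 : RtoC (/ (2 * PI) * Kr p1 p2)%R *
     (2 * PI * (p1 * p1 / (1 - p1 * Cconj p2) + p1 * p2 + p2 * p2 / (1 - Cconj p1 * p2)))
     = MM2 p1 p2 * / RtoC (1 - Cmod (p1 * Cconj p2) ^ 2)%R).
  { rewrite RtoC_mult, RtoC_inv by exact HPI'. rewrite HK, HD.
    unfold MM2. rewrite HD in HDc. rewrite RtoC_mult. fld. }
  assert (Hrho : rho p1 p2 = mrl (dens p1 p2)).
  { unfold mrl, rho. rewrite Hm. rewrite (Cmod_mult (MM p1 p2)), Cmod_inv by exact HDc. rewrite Cmod_R, Rabs_pos_eq by lra.
    unfold MM. reflexivity. }
  assert (Hdpos : (0 < mrl (dens p1 p2))%R) by (apply Cmod_gt_0; exact Hnz).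
  assert (Hdc : RtoC (mrl (dens p1 p2)) <> 0) by (intro HH; apply (f_equal fst) in HH; simpl in HH; lra).
  assert (Hcirc : Cconj (circ zeta) = Cconj (MM p1 p2) * / RtoC (1 - Cmod (p1 * Cconj p2) ^ 2)%R * / RtoC (mrl (dens p1 p2))).
  { assert (E : circ zeta = MM p1 p2 * / RtoC (1 - Cmod (p1 * Cconj p2) ^ 2)%R * / RtoC (mrl (dens p1 p2))).
    { unfold is_mean_direction in Hdir. rewrite <- Hm, Hdir. fld. }
    rewrite E, !Cmult_conj, !Cinv_conj, !conj_RtoC by assumption. reflexivity. }
  unfold skewness. rewrite skn_val by assumption. rewrite Hm2, Hcirc.
  replace (Cconj (MM p1 p2) * / RtoC (1 - Cmod (p1 * Cconj p2) ^ 2)%R * / RtoC (mrl (dens p1 p2)) *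
    (Cconj (MM p1 p2) * / RtoC (1 - Cmod (p1 * Cconj p2) ^ 2)%R * / RtoC (mrl (dens p1 p2))) *
    (MM2 p1 p2 * / RtoC (1 - Cmod (p1 * Cconj p2) ^ 2)%R))
   with (Cconj (MM p1 p2) * Cconj (MM p1 p2) * MM2 p1 p2 *
     RtoC (/ ((1 - Cmod (p1 * Cconj p2) ^ 2) ^ 3 * mrl (dens p1 p2) ^ 2))%R).
  2: { rewrite RtoC_inv, RtoC_mult, !RtoC_pow. fld. apply Rmult_integral_contrapositive; split; apply pow_nonzero; lra. }
  rewrite im_scal_r, key. rewrite Hrho.
  assert (HR : (0 < Rpower (1 - mrl (dens p1 p2)) (3 / 2))%R) by (unfold Rpower; apply exp_pos).
  field. repeat split; lra.
Qed.
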